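(* The group $\mathbb{Z}^2$ admits no context-free-preimage left-order. In particular, if a finitely generated group $G$ admits a context-free-preimage left-order, then $G$ does not contain a subgroup isomorphic to $\mathbb{Z}^2$.
   Context: A finite generating set of a group $G$ is a finite set $X$ with a surjective monoid homomorphism $\pi\colon X^*\to G$. A left-order $\prec$ on $G$ with positive cone $P=\{g:1\prec g\}$ is a context-free-preimage left-order if, for a finite generating set $(X,\pi)$ of $G$, the full preimage $\pi^{-1}(P)\subseteq X^*$ is a context-free language (accepted by a nondeterministic pushdown automaton). *)

(* Defs.v *)
From mathcomp Require Import all_boot all_algebra.
Set Implicit Arguments. Unset Strict Implicit. Unset Printing Implicit Defensive.
Import GRing.Theory.

Record group := Group {
  gcarrier :> Type;
  gmul : gcarrier -> gcarrier -> gcarrier;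
  gone : gcarrier;
  ginv : gcarrier -> gcarrier;
  gmulA : forall x y z, gmul x (gmul y z) = gmul (gmul x y) z;
  gmul1 : forall x, gmul gone x = x;
  gmulr1 : forall x, gmul x gone = x;
  gmulV : forall x, gmul (ginv x) x = gone;
  gmulVr : forall x, gmul x (ginv x) = gone
}.

Definition group_hom (G H : group) (f : G -> H) : Prop :=
  forall x y, f (gmul x y) = gmul (f x) (f y).

Definition Z2_group : group.
Proof.
refine (@Group (int * int)%type
  (fun a b => (a.1 + b.1, a.2 + b.2)%R) (0, 0)%R (fun a => (- a.1, - a.2)%R)
  _ _ _ _ _).
- by move=> [a b] [c d] [e f] /=; rewrite !addrA.
- by move=> [a b] /=; rewrite !add0r.
- by move=> [a b] /=; rewrite !addr0.
- by move=> [a b] /=; rewrite !addNr.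
- by move=> [a b] /=; rewrite !subrr.
Defined.

Definition eval_word (G : group) (X : Type) (gen : X -> G) (w : seq X) : G :=
  foldr (fun x g => gmul (gen x) g) (gone G) w.

Definition generating (G : group) (X : finType) (gen : X -> G) : Prop :=
  forall g : G, exists w : seq X, eval_word gen w = g.

Definition finitely_generated (G : group) : Prop :=
  exists (X : finType) (gen : X -> G), generating gen.

Definition left_order (G : group) (lt : G -> G -> Prop) : Prop :=
  [/\ (forall x, ~ lt x x),
      (forall x y z, lt x y -> lt y z -> lt x z),
      (forall x y, x <> y -> lt x y \/ lt y x) &
      (forall g x y, lt x y -> lt (gmul g x) (gmul g y))].

Definition positive_cone (G : group) (lt : G -> G -> Prop) : G -> Prop :=
  fun g => lt (gone G) g.

Record pda (X : finType) := Pda {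
  pda_state : finType;
  pda_stack : finType;
  pda_start : pda_state;
  pda_bottom : pda_stack;
  pda_final : pred pda_state;
  (* trans q a z : possible moves reading a (None = epsilon move) with z
     on top of the stack: new state and word replacing z *)
  pda_trans : pda_state -> option X -> pda_stack -> seq (pda_state * seq pda_stack)
}.

Section PDA.
Variables (X : finType) (M : pda X).

Definition config := (pda_state M * seq X * seq (pda_stack M))%type.

Inductive pda_step : config -> config -> Prop :=
  | step_eps q w z gam q' alpha :
      (q', alpha) \in pda_trans q None z ->
      pda_step (q, w, z :: gam) (q', w, alpha ++ gam)
  | step_read q a w z gam q' alpha :
      (q', alpha) \in pda_trans q (Some a) z ->
      pda_step (q, a :: w, z :: gam) (q', w, alpha ++ gam).

Inductive pda_steps : config -> config -> Prop :=
  | steps_refl c : pda_steps c c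
  | steps_cons c1 c2 c3 : pda_step c1 c2 -> pda_steps c2 c3 -> pda_steps c1 c3.

Definition pda_accepts (w : seq X) : Prop :=
  exists (q : pda_state M) (gam : seq (pda_stack M)),
    pda_final q /\ pda_steps (pda_start M, w, [:: pda_bottom M]) (q, [::], gam).
End PDA.

Definition context_free (X : finType) (L : seq X -> Prop) : Prop :=
  exists M : pda X, forall w, L w <-> pda_accepts M w.

Definition cf_preimage_left_order (G : group) (lt : G -> G -> Prop) : Prop :=
  left_order lt /\
  exists (X : finType) (gen : X -> G),
    generating gen /\
    context_free (fun w => positive_cone lt (eval_word gen w)).

(* Main.v *)
Require Import Defs.
From mathcomp Require Import all_boot all_algebra zify ring.
From Stdlib Require Import Classical.
Set Implicit Arguments. Unset Strict Implicit. Unset Printing Implicit Defensive.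

Module Part1.

Definition ow (X : Type) (a : option X) : seq X := if a is Some x then [:: x] else [::].
Definition rep (X : Type) (s : nat) (v : seq X) := flatten (nseq s v).

Lemma rep_snoc (X : Type) s (v : seq X) : rep s.+1 v = rep s v ++ v.
Proof. rewrite /rep; elim: s => [|s IH] /=; first by rewrite cats0. by rewrite -catA -IH. Qed.

Section PDAT.
Variables (X : finType) (M : pda X).
Notation Q := (pda_state M).
Notation Z := (pda_stack M).
Notation steps := (@pda_steps X M).
Notation step := (@pda_step X M).
Notation final := (@pda_final X M).
Notation trans := (@pda_trans X M).

Inductive TL : Q -> seq Z -> seq X -> option Q -> nat -> Prop :=
| TLnil q : TL q [::] [::] (Some q) 0
| TLstop q zs : final q -> TL q zs [::] None 0
| TLcons q a z zs q1 alpha w1 w2 q2 r n1 n2 :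
    (q1, alpha) \in trans q a z ->
    TL q1 alpha w1 (Some q2) n1 -> TL q2 zs w2 r n2 ->
    TL q (z :: zs) (ow a ++ w1 ++ w2) r (n1 + n2).+1
| TLcstop q a z zs q1 alpha w1 n1 :
    (q1, alpha) \in trans q a z ->
    TL q1 alpha w1 None n1 ->
    TL q (z :: zs) (ow a ++ w1) None n1.+1.

Lemma steps_trans c1 c2 c3 : steps c1 c2 -> steps c2 c3 -> steps c1 c3.
Proof. elim=> // {}c1 c c' H _ IH H2; apply: (@steps_cons X M) H (IH H2). Qed.

Lemma step1 q a z g w q1 alpha : (q1, alpha) \in trans q a z ->
  step (q, ow a ++ w, z :: g) (q1, w, alpha ++ g).
Proof. by case: a => [x|] H; constructor. Qed.

Lemma TL_sound q zs w r n : TL q zs w r n -> forall rest g,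
  match r with
  | Some q' => steps (q, w ++ rest, zs ++ g) (q', rest, g)
  | None => exists qf g', final qf /\ steps (q, w ++ rest, zs ++ g) (qf, rest, g')
  end.
Proof.
elim=> {q zs w r n}.
- move=> q rest g; exact: steps_refl.
- move=> q zs Hf rest g; exists q, (zs ++ g); split=> //; exact: steps_refl.
- move=> q a z zs q1 alpha w1 w2 q2 r n1 n2 Ht _ IH1 _ IH2 rest g.
  have S1 := step1 (zs ++ g) (w1 ++ w2 ++ rest) Ht.
  have S2 := IH1 (w2 ++ rest) (zs ++ g).
  rewrite -!catA.
  case: r IH2 => [q'|] IH2.
  + apply: steps_cons S1 _; apply: steps_trans S2 _; exact: IH2.
  + have [qf [g' [Hf S3]]] := IH2 rest g.
    exists qf, g'; split=> //; apply: steps_cons S1 _; apply: steps_trans S2 S3.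
- move=> q a z zs q1 alpha w1 n1 Ht _ IH rest g.
  have S1 := step1 (zs ++ g) (w1 ++ rest) Ht.
  have [qf [g' [Hf S3]]] := IH rest (zs ++ g).
  exists qf, g'; split=> //; rewrite -catA; exact: steps_cons S1 S3.
Qed.

Lemma TL_split xs : forall q ys w r n, TL q (xs ++ ys) w r n ->
  (exists q2 w1 w2 n1 n2, w = w1 ++ w2 /\ TL q xs w1 (Some q2) n1 /\ TL q2 ys w2 r n2)
  \/ (r = None /\ exists n', TL q xs w None n').
Proof.
elim: xs => [|x xs IH] q ys w r n H.
  by left; exists q, [::], w, 0, n; split=> //; split=> //; constructor.
inversion H as [|q0 zs0 Hf E1 E2 E3 E4|q0 a z zs q1 alpha w1 w2 q2 r0 n1 n2 Ht A1 A2 E1 E2 E3 E4 E5|q0 a z zs q1 alpha w1 n1 Ht A1 E1 E2 E3 E4]; subst.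
- by right; split=> //; exists 0; constructor.
- case: (IH _ _ _ _ _ A2) => [[q3 [w2a [w2b [m1 [m2 [E [A B]]]]]]]|[Er [n' A]]].
  + left; exists q3, (ow a ++ w1 ++ w2a), w2b, (n1 + m1).+1, m2; split.
      by rewrite E !catA.
    split=> //; apply: TLcons Ht A1 A.
  + right; split=> //; exists (n1 + n').+1; apply: TLcons Ht A1 A.
- right; split=> //; exists n1.+1; apply: TLcstop Ht A1.
Qed.

Lemma TL_complete c c' : steps c c' -> forall qf g, c' = (qf, [::], g) ->
  final qf -> exists n, TL c.1.1 c.2 c.1.2 None n.
Proof.
elim=> {c c'}.
- move=> c qf g -> Hf; exists 0; constructor=> //.
- move=> c1 c2 c3 H _ IH qf g E Hf.
  have [n Hn] := IH qf g E Hf.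
  case: H Hn => /=.
  + move=> q w z gam q' alpha Ht Hn.
    case: (TL_split Hn) => [[q2 [w1 [w2 [n1 [n2 [Ew [A B]]]]]]]|[_ [n' A]]].
    * exists (n1 + n2).+1; rewrite Ew; exact: (TLcons (a := None) Ht A B).
    * exists n'.+1; exact: (@TLcstop q None z gam q' alpha w n' Ht A).
  + move=> q x w z gam q' alpha Ht Hn.
    case: (TL_split Hn) => [[q2 [w1 [w2 [n1 [n2 [Ew [A B]]]]]]]|[_ [n' A]]].
    * exists (n1 + n2).+1; rewrite Ew; exact: (TLcons (a := Some x) Ht A B).
    * exists n'.+1; exact: (@TLcstop q (Some x) z gam q' alpha w n' Ht A).
Qed.

Lemma acc_TL w : pda_accepts M w <-> exists n, TL (pda_start M) [:: pda_bottom M] w None n.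
Proof.
split.
- move=> [q [g [Hf H]]]; exact: (TL_complete H (erefl _) Hf).
- move=> [n H]; have /= := TL_sound H [::] [::]; rewrite !cats0.
  move=> [qf [g' [Hf S]]]; by exists qf, g'.
Qed.


Notation lab := (Q * seq Z * option Q)%type.
Definition T (l : lab) w n := TL l.1.1 l.1.2 w l.2 n.
Definition Ctx (l l' : lab) (u z : seq X) k :=
  forall w m, T l' w m -> T l (u ++ w ++ z) (m + k).

Lemma ctx_id l : Ctx l l [::] [::] 0.
Proof. by move=> w m; rewrite cats0 addn0. Qed.

Lemma ctx_comp l1 l2 l3 u z k u' z' k' : Ctx l1 l2 u z k -> Ctx l2 l3 u' z' k' ->
  Ctx l1 l3 (u ++ u') (z' ++ z) (k' + k).
Proof.
move=> C1 C2 w m H; have := C1 _ _ (C2 _ _ H).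
by rewrite !catA addnA.
Qed.

Lemma ctx_iter l v y k : Ctx l l v y k -> forall s, Ctx l l (rep s v) (rep s y) (s * k).
Proof.
move=> C; elim=> [|s IH]; first exact: ctx_id.
rewrite rep_snoc mulSn; exact: ctx_comp IH C.
Qed.

Lemma ctx_left q a z zs r q1 alpha q2 w2 n2 :
  (q1, alpha) \in trans q a z -> TL q2 zs w2 r n2 ->
  Ctx (q, z :: zs, r) (q1, alpha, Some q2) (ow a) w2 n2.+1.
Proof. move=> Ht H2 w m H; rewrite /T /= addnS; exact: TLcons Ht H H2. Qed.

Lemma ctx_right q a z zs r q1 alpha q2 w1 n1 :
  (q1, alpha) \in trans q a z -> TL q1 alpha w1 (Some q2) n1 ->
  Ctx (q, z :: zs, r) (q2, zs, r) (ow a ++ w1) [::] n1.+1.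
Proof.
move=> Ht H1 w m H; rewrite /T /= cats0 -catA addnS addnC; exact: TLcons Ht H1 H.
Qed.

Lemma ctx_stop q a z zs q1 alpha :
  (q1, alpha) \in trans q a z ->
  Ctx (q, z :: zs, None) (q1, alpha, None) (ow a) [::] 1.
Proof. move=> Ht w m H; rewrite /T /= cats0 addn1; exact: TLcstop Ht H. Qed.

Definition alphas : seq (seq Z) :=
  [:: pda_bottom M] :: [seq x.2 | x <- flatten [seq trans t.1.1 t.1.2 t.2 | t <- enum {: Q * option X * Z}]].
Definition sufs : seq (seq Z) := flatten [seq [seq drop i s | i <- iota 0 (size s).+1] | s <- alphas].

Lemma sufs_behead z zs : (z :: zs) \in sufs -> zs \in sufs.
Proof.
case/flattenP=> s /mapP [al Hal ->] /mapP [i Hi E].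
apply/flattenP; exists [seq drop i al | i <- iota 0 (size al).+1]; first by apply/mapP; exists al.
apply/mapP; exists i.+1; last by rewrite -add1n -drop_drop -E /= drop0.
move: Hi; rewrite !mem_iota /= !add0n ltnS => Hi.
have : 0 < size (drop i al) by rewrite -E.
by rewrite size_drop subn_gt0.
Qed.

Lemma alpha_sufs q a z q1 alpha : (q1, alpha) \in trans q a z -> alpha \in sufs.
Proof.
move=> Ht; apply/flattenP; exists [seq drop i alpha | i <- iota 0 (size alpha).+1].
  apply/mapP; exists alpha=> //; rewrite inE; apply/orP; right.
  apply/mapP; exists (q1, alpha)=> //; apply/flattenP.
  exists (trans q a z)=> //; apply/mapP; exists (q, a, z)=> //; by rewrite mem_enum.
by apply/mapP; exists 0=> //; rewrite drop0.
Qed.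

Lemma bottom_sufs : [:: pda_bottom M] \in sufs.
Proof.
apply/flattenP; exists [seq drop i [:: pda_bottom M] | i <- iota 0 2]; first by apply/mapP; exists [:: pda_bottom M]; rewrite ?inE ?eqxx.
by rewrite inE eqxx.
Qed.

Definition Lab : seq lab := [seq (x.1, s, x.2) | x <- enum {: Q * option Q}, s <- sufs].
Definition good (l : lab) := l.1.2 \in sufs.
Lemma good_Lab l : good l -> l \in Lab.
Proof.
case: l => [[q s] r] /= H.
by apply: (allpairs_f (fun x s => (x.1, s, x.2)) (x := (q, r))) => //; rewrite mem_enum.
Qed.

Definition NN := size Lab.
Definition BB := 2 ^ NN.

Lemma size_ow (a : option X) : size (ow a) <= 1.
Proof. by case: a. Qed.

Lemma descend q zs w r n : TL q zs w r n -> good (q, zs, r) -> BB < (size w).+1 ->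
  exists l1 u z k w1 m, [/\ w = u ++ w1 ++ z, Ctx (q, zs, r) l1 u z k, T l1 w1 m,
    n = k + m & good l1 /\ BB < (size w1).+1 <= 2 * BB].
Proof.
elim=> {q zs w r n}.
- move=> q _ /=; rewrite /BB ltnS leqn0 expn_eq0 //.
- move=> q zs _ _ /=; rewrite /BB ltnS leqn0 expn_eq0 //.
- move=> q a z zs q1 alpha w1 w2 q2 r n1 n2 Ht H1 IH1 H2 IH2 Hg Hs.
  have g1 : good (q1, alpha, Some q2) by exact: alpha_sufs Ht.
  have g2 : good (q2, zs, r) by exact: sufs_behead Hg.
  case: (ltnP BB (size w1).+1) => L1.
    have [l1 [u [z' [k [w' [m [Ew C Tm En [G B]]]]]]]] := IH1 g1 L1.
    exists l1, (ow a ++ u), (z' ++ w2), (k + n2.+1), w', m; split=> //.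
    + by rewrite Ew !catA.
    + exact: ctx_comp (ctx_left Ht H2) C.
    + rewrite En; lia.
  case: (ltnP BB (size w2).+1) => L2.
    have [l1 [u [z' [k [w' [m [Ew C Tm En [G B]]]]]]]] := IH2 g2 L2.
    exists l1, (ow a ++ w1 ++ u), z', (k + n1.+1), w', m; split=> //.
    + by rewrite Ew !catA.
    + rewrite -(cats0 z') catA; exact: ctx_comp (ctx_right Ht H1) C.
    + rewrite En; lia.
  exists (q, z :: zs, r), [::], [::], 0, (ow a ++ w1 ++ w2), (n1 + n2).+1; split=> //.
  + by rewrite cats0.
  + exact: ctx_id.
  + exact: TLcons Ht H1 H2.
  + split=> //; rewrite Hs /= !size_cat; have := size_ow a.
    move: L1 L2; lia.
- move=> q a z zs q1 alpha w1 n1 Ht H1 IH1 Hg Hs.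
  have g1 : good (q1, alpha, None) by exact: alpha_sufs Ht.
  case: (ltnP BB (size w1).+1) => L1.
    have [l1 [u [z' [k [w' [m [Ew C Tm En [G B]]]]]]]] := IH1 g1 L1.
    exists l1, (ow a ++ u), z', (k + 1), w', m; split=> //.
    + by rewrite Ew !catA.
    + rewrite -(cats0 z'); exact: ctx_comp (ctx_stop zs Ht) C.
    + rewrite En; lia.
  exists (q, z :: zs, None), [::], [::], 0, (ow a ++ w1), n1.+1; split=> //.
  + by rewrite cats0.
  + exact: ctx_id.
  + exact: TLcstop Ht H1.
  + split=> //; rewrite Hs /= !size_cat; have := size_ow a.
    have : 0 < BB by rewrite expn_gt0. move: L1; lia.
Qed.

Definition Res (l : lab) (S : seq lab) w n : Prop :=
  (exists2 l', l' \in S & exists u x z k m,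
      [/\ w = u ++ x ++ z, Ctx l l' u z k, T l' x m & n = k + m])
  \/ (exists l'' u v x y z k1 k2 m,
      [/\ w = u ++ v ++ x ++ y ++ z, Ctx l l'' u z k1, Ctx l'' l'' v y k2.+1,
          T l'' x m & n = k1 + k2.+1 + m]).

Lemma lift l lc un zn kn' S wc nc w n :
  Ctx l lc un zn kn'.+1 -> l \notin S -> Res lc (l :: S) wc nc ->
  w = un ++ wc ++ zn -> n = nc + kn'.+1 -> Res l S w n.
Proof.
move=> Cn nS [[l' Hl' H]|H] -> ->.
- move: H => [u [x [z [k [m [Ew C Tm En]]]]]].
- rewrite inE in Hl'; case/orP: Hl' => [/eqP El|Hl'].
  + subst l'; right; exists l, [::], (un ++ u), x, (z ++ zn), [::], 0, (k + kn'), m; split.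
    * by rewrite Ew /= cats0 !catA.
    * exact: ctx_id.
    * rewrite -addnS; exact: ctx_comp Cn C.
    * exact: Tm.
    * rewrite En; lia.
  + left; exists l'=> //; exists (un ++ u), x, (z ++ zn), (k + kn'.+1), m; split=> //.
    * by rewrite Ew !catA.
    * exact: ctx_comp Cn C.
    * rewrite En; lia.
- move: H => [l'' [u [v [x [y [z [k1 [k2 [m [Ew C C' Tm En]]]]]]]]]].
  right; exists l'', (un ++ u), v, x, y, (z ++ zn), (k1 + kn'.+1), k2, m; split=> //.
  + by rewrite Ew !catA.
  + exact: ctx_comp Cn C.
  + rewrite En; lia.
Qed.

Lemma rep_lemma q zs w r n : TL q zs w r n -> forall S, uniq S -> {subset S <= Lab} ->
  good (q, zs, r) -> 2 ^ (NN - size S) < (size w).+1 -> Res (q, zs, r) S w n.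
Proof.
move=> H; have Hself : T (q, zs, r) w n by [].
elim: H Hself => {q zs w r n}.
- by move=> q _ S _ _ _ /=; rewrite ltnS leqn0 expn_eq0.
- by move=> q zs _ _ S _ _ _ /=; rewrite ltnS leqn0 expn_eq0.
- move=> q a z zs q1 alpha w1 w2 q2 r n1 n2 Ht H1 IH1 H2 IH2 Hself S uS sS Hg Hs.
  have g1 : good (q1, alpha, Some q2) by exact: alpha_sufs Ht.
  have g2 : good (q2, zs, r) by exact: sufs_behead Hg.
  case: (boolP ((q, z :: zs, r) \in S)) => inS.
    left; exists (q, z :: zs, r) => //; exists [::], (ow a ++ w1 ++ w2), [::], 0, (n1 + n2).+1.
    split=> //; [by rewrite cats0 | exact: ctx_id].
  have uS' : uniq ((q, z :: zs, r) :: S) by rewrite /= inS.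
  have sS' : {subset (q, z :: zs, r) :: S <= Lab}.
    by move=> l; rewrite inE => /orP [/eqP ->|/sS //]; exact: good_Lab.
  have Hsz := uniq_leq_size uS' sS'.
  have E2 : 2 ^ (NN - size S) = 2 * 2 ^ (NN - size ((q, z :: zs, r) :: S)).
    rewrite -expnS /=; congr (2 ^ _); move: Hsz; rewrite /NN /=; lia.
  case: (ltnP (2 ^ (NN - size ((q, z :: zs, r) :: S))) (size w1).+1) => L1.
    apply: (lift (ctx_left Ht H2) inS (IH1 H1 _ uS' sS' g1 L1)) => //; lia.
  case: (ltnP (2 ^ (NN - size ((q, z :: zs, r) :: S))) (size w2).+1) => L2.
    apply: (lift (ctx_right Ht H1) inS (IH2 H2 _ uS' sS' g2 L2)); first by rewrite cats0 catA.
    lia.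
  move: Hs; rewrite E2 !size_cat; have := size_ow a; lia.
- move=> q a z zs q1 alpha w1 n1 Ht H1 IH1 Hself S uS sS Hg Hs.
  have g1 : good (q1, alpha, None) by exact: alpha_sufs Ht.
  case: (boolP ((q, z :: zs, None) \in S)) => inS.
    left; exists (q, z :: zs, None) => //; exists [::], (ow a ++ w1), [::], 0, n1.+1.
    split=> //; [by rewrite cats0 | exact: ctx_id].
  have uS' : uniq ((q, z :: zs, None) :: S) by rewrite /= inS.
  have sS' : {subset (q, z :: zs, None) :: S <= Lab}.
    by move=> l; rewrite inE => /orP [/eqP ->|/sS //]; exact: good_Lab.
  have Hsz := uniq_leq_size uS' sS'.
  have E2 : 2 ^ (NN - size S) = 2 * 2 ^ (NN - size ((q, z :: zs, None) :: S)).
    rewrite -expnS /=; congr (2 ^ _); move: Hsz; rewrite /NN /=; lia.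
  case: (ltnP (2 ^ (NN - size ((q, z :: zs, None) :: S))) (size w1).+1) => L1.
    apply: (lift (ctx_stop zs Ht) inS (IH1 H1 _ uS' sS' g1 L1)); first by rewrite cats0.
    lia.
  have : 0 < 2 ^ (NN - size ((q, z :: zs, None) :: S)) by rewrite expn_gt0.
  move: Hs; rewrite E2 !size_cat; have := size_ow a; lia.
Qed.

Theorem pumping : exists p, forall w, pda_accepts M w -> p < size w ->
  exists u v x y z, [/\ w = u ++ v ++ x ++ y ++ z, size (v ++ x ++ y) <= p,
    0 < size (v ++ y) & forall s, pda_accepts M (u ++ rep s v ++ x ++ rep s y ++ z)].
Proof.
exists (2 * BB) => w /acc_TL [n Hn] Hp.
elim/ltn_ind: n Hn => n IH Hn.
have Hg0 : good (pda_start M, [:: pda_bottom M], None) by exact: bottom_sufs.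
have HB : BB < (size w).+1 by move: Hp; lia.
have [[[q1 s1] r1] [u1 [z1 [k1 [w1 [m1 [Ew C1 T1 En [G1 B1]]]]]]]] := descend Hn Hg0 HB.
case/andP: B1 => B1 B2.
have := rep_lemma T1 (S := [::]) (erefl _) (fun _ (H : _ \in [::]) => ltac:(by rewrite in_nil in H)) G1.
rewrite subn0 => /(_ B1) [[l' //]|].
move=> [l'' [u2 [v [x [y [z2 [k2 [kk [m3 [Ew1 C2 C3 T3 Em]]]]]]]]]].
case: (posnP (size (v ++ y))) => Hvy.
  move: Hvy; rewrite size_cat => /eqP; rewrite addn_eq0 => /andP [/eqP/size0nil Ev /eqP/size0nil Ey].
  apply: (IH (m3 + k2 + k1)); first by rewrite En Em; lia.
  have := C1 _ _ (C2 _ _ T3); congr (T _ _ _).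
  by rewrite Ew Ew1 Ev Ey.
exists (u1 ++ u2), v, x, y, (z2 ++ z1); split=> //.
- by rewrite Ew Ew1 !catA.
- move: B2; rewrite Ew1 !size_cat; lia.
- move=> s; apply/acc_TL; exists (m3 + s * kk.+1 + k2 + k1).
  have := C1 _ _ (C2 _ _ (ctx_iter C3 s T3)); congr (T _ _ _).
  by rewrite !catA.
Qed.

End PDAT.

End Part1.
Import Part1.

Module Part2.

Section InvHom.
Variables (X S : finType) (M : pda X) (h : S -> seq X).
Hypothesis hne : forall a, h a <> [::].
Notation Q := (pda_state M).
Notation Z := (pda_stack M).

Definition KK := \max_(a : S) size (h a).
Notation Q' := (Q * option (S * 'I_KK.+1))%type.

Definition rem (b : option (S * 'I_KK.+1)) : seq X :=
  if b is Some (a, k) then drop k (h a) else [::].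
Definition hw (s : seq S) : seq X := flatten (map h s).

Definition final' (p : Q') : bool :=
  pda_final p.1 && (if p.2 is Some (a, k) then size (h a) <= k else true).

Definition trans' (p : Q') (oa : option S) (z : Z) : seq (Q' * seq Z) :=
  match oa, p.2 with
  | Some a, None => [:: ((p.1, Some (a, ord0)), [:: z])]
  | Some _, Some _ => [::]
  | None, None => [seq ((t.1, None), t.2) | t <- pda_trans p.1 None z]
  | None, Some (a, k) => [seq ((t.1, Some (a, k)), t.2) | t <- pda_trans p.1 None z] ++
      match drop k (h a) with
      | x :: _ => [seq ((t.1, Some (a, inord k.+1)), t.2) | t <- pda_trans p.1 (Some x) z]
      | [::] => [:: ((p.1, None), [:: z])]
      end
  end.

Definition M' : pda S := @Pda S (Q * option (S * 'I_KK.+1))%type Z (pda_start M, None) (pda_bottom M) final' trans'.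

Definition cmap (c : config M') : config M := (c.1.1.1, rem c.1.1.2 ++ hw c.1.2, c.2).

Lemma drop_cons_inord a (k : 'I_KK.+1) x rest : drop k (h a) = x :: rest ->
  drop (@inord KK k.+1) (h a) = rest.
Proof.
move=> E.
have Hk : k < size (h a) by rewrite -subn_gt0 -size_drop E.
have Hs : size (h a) <= KK by rewrite /KK; exact: (leq_bigmax a).
rewrite inordK; last by rewrite ltnS; lia.
by rewrite -add1n -drop_drop E /= drop0.
Qed.

Lemma steps_trans' (Y : finType) (N : pda Y) c1 c2 c3 :
  pda_steps c1 c2 -> pda_steps c2 c3 -> @pda_steps Y N c1 c3.
Proof. elim=> // {}c1 c c' H _ IH H2; apply: steps_cons H (IH H2). Qed.

Lemma sound_step c c' : @pda_step S M' c c' -> @pda_steps X M (cmap c) (cmap c').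
Proof.
case=> [[q b] w z gam [q' b'] alpha|[q b] a w z gam [q' b'] alpha]; rewrite /trans' /cmap /=.
- case: b => [[a k]|].
  + rewrite mem_cat => /orP [/mapP [[q1 al] Ht [-> -> ->]]|].
      apply: steps_cons (steps_refl _); exact: step_eps Ht.
    case E: (drop k (h a)) => [|x rest].
      rewrite inE => /eqP [-> -> ->] /=; rewrite E /=; exact: steps_refl.
    move=> /mapP [[q1 al] Ht [-> -> ->]] /=.
    rewrite E (drop_cons_inord E) /=; apply: steps_cons (steps_refl _); exact: step_read Ht.
  + move=> /mapP [[q1 al] Ht [-> -> ->]] /=.
    apply: steps_cons (steps_refl _); exact: step_eps Ht.
- case: b => [[a' k]|] //.
  rewrite inE => /eqP [-> -> ->] /=; rewrite drop0; exact: steps_refl.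
Qed.

Lemma sound_steps c c' : @pda_steps S M' c c' -> @pda_steps X M (cmap c) (cmap c').
Proof.
elim=> [c0|c1 c2 c3 H _ IH]; first exact: steps_refl.
exact: steps_trans' (sound_step H) IH.
Qed.

Definition accfrom (c : config M') := exists q g, final' q /\ @pda_steps S M' c (q, [::], g).

Lemma hw_nil s : hw s = [::] -> s = [::].
Proof. case: s => //= a s H; exfalso; case E: (h a) => [|x l]; [exact: (@hne a E) | by move: H; rewrite /hw /= E]. Qed.

Lemma ready q a (k : 'I_KK.+1) s z g0 x rest q' alpha :
  drop k (h a) = x :: rest -> (q', alpha) \in pda_trans q (Some x) z ->
  accfrom ((q', Some (a, inord k.+1)), s, alpha ++ g0) ->
  accfrom ((q, Some (a, k)), s, z :: g0).
Proof.
move=> E Ht [qq [gg [Hf St]]]; exists qq, gg; split=> //.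
apply: steps_cons St; apply: step_eps; rewrite /trans' /= mem_cat E; apply/orP; right.
by apply/mapP; exists (q', alpha).
Qed.

Lemma complete_steps c c' : @pda_steps X M c c' -> forall q b s g qf g',
  c = (q, rem b ++ hw s, g) -> c' = (qf, [::], g') -> pda_final qf ->
  accfrom ((q, b), s, g).
Proof.
elim=> {c c'}.
- move=> c q b s g qf g' -> [-> E ->] Hf.
  have Eb : rem b = [::] by move: E; case: (rem b).
  have Es : s = [::] by apply: hw_nil; move: E; rewrite Eb.
  subst s.
  exists (qf, b), g'; split; last exact: steps_refl.
  rewrite /final' /= Hf /=; case: b {E} Eb => [[a k]|] //= Eb.
  by move: (size_drop k (h a)); rewrite Eb /=; lia.
- move=> c1 c2 c3 H _ IH q b s g qf g' E1 E3 Hf.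
  case: H E1 IH.
  + move=> q0 w z gam q' alpha Ht [Eq Ew Eg] IH; subst q0 g.
    have [qq [gg [Hf' St]]] := IH q' b s (alpha ++ gam) qf g' (ltac:(by rewrite Ew)) E3 Hf.
    exists qq, gg; split=> //; apply: steps_cons St; apply: step_eps.
    rewrite /trans' /=; case: b {Ew} => [[a k]|].
      by rewrite mem_cat; apply/orP; left; apply/mapP; exists (q', alpha).
    by apply/mapP; exists (q', alpha).
  + move=> q0 x w z gam q' alpha Ht [Eq Ew Eg] IH; subst q0 g.
    have Hb : forall a (k : 'I_KK.+1) rest s1, drop k (h a) = x :: rest ->
        rest ++ hw s1 = w -> accfrom ((q, Some (a, k)), s1, z :: gam).
      move=> a k rest s1 Ed Er; apply: (ready Ed Ht).
      apply: (IH q' _ s1 (alpha ++ gam) qf g' _ E3 Hf).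
      by rewrite /= (drop_cons_inord Ed) Er.
    have Hload : rem b = [::] -> accfrom ((q, None), s, z :: gam).
      move=> Eb; move: Ew; rewrite Eb /= /hw.
      case: s => [|c s] //= Ew.
      case Ec: (h c) Ew => [|y rest] Ew; first by exfalso; exact: (@hne c Ec).
      case: Ew => Exy Er; subst y.
      have [qq [gg [Hf' St]]] := Hb c ord0 rest s (ltac:(by rewrite drop0)) (esym Er).
      exists qq, gg; split=> //.
      have Ht' : ((q, Some (c, ord0)), [:: z]) \in pda_trans (p := M') (q, None) (Some c) z.
        by rewrite /= /trans' /= inE.
      exact: steps_cons (@step_read S M' _ _ s _ gam _ _ Ht') St.
    case: b Ew Hload => [[a k]|] Ew Hload; last exact: Hload (erefl _).
    rewrite /= in Ew.
    case Ed: (drop k (h a)) Ew => [|y rest] Ew.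
      have [qq [gg [Hf' St]]] := Hload (ltac:(by rewrite /= Ed)).
      exists qq, gg; split=> //.
      have Ht' : ((q, None), [:: z]) \in pda_trans (p := M') (q, Some (a, k)) None z.
        by rewrite /= /trans' /= mem_cat Ed inE eqxx orbT.
      exact: steps_cons (@step_eps S M' _ _ _ gam _ _ Ht') St.
    case: Ew => Exy Er; subst y; exact: Hb a k rest s Ed (esym Er).
Qed.

Lemma invhom_acc s : pda_accepts M (hw s) <-> pda_accepts M' s.
Proof.
split.
- move=> [qf [g [Hf St]]].
  have [qq [gg [Hf' St']]] := complete_steps St (q := pda_start M) (b := None) (s := s) (erefl _) (erefl _) Hf.
  by exists qq, gg.
- move=> [[q b] [g [Hf St]]]; have := sound_steps St; rewrite /cmap /= cats0.
  move: Hf; rewrite /final' /= => /andP [Hf Hb] St'.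
  exists q, g; split=> //; move: St'; congr (pda_steps _ _).
  case: b Hb {St Hf} => [[a k]|] //= Hb; by rewrite drop_oversize.
Qed.

End InvHom.

End Part2.
Import Part2.

Module Part3.
Import GRing.Theory Num.Theory.
Local Open Scope ring_scope.

Notation V2 := (int * int)%type.

Lemma pair_mulrn (x : V2) n : x *+ n = (x.1 *+ n, x.2 *+ n).
Proof. elim: n => [|n IH]; first by rewrite !mulr0n. by rewrite !mulrS IH. Qed.

Section Cone.
Variable P : V2 -> Prop.
Hypothesis P0 : ~ P 0.
Hypothesis Padd : forall x y, P x -> P y -> P (x + y).
Hypothesis Ptot : forall x, x <> 0 -> P x \/ P (- x).

Lemma Pasym x : P x -> ~ P (- x).
Proof. by move=> H1 H2; apply: P0; rewrite -(subrr x); exact: Padd. Qed.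

Notation NNg x := (x = 0 \/ P x).

Lemma PNN x y : P x -> NNg y -> P (x + y).
Proof. by move=> H [->|H2]; [rewrite addr0 | exact: Padd]. Qed.

Lemma NNadd x y : NNg x -> NNg y -> NNg (x + y).
Proof. by move=> [->|H] H2; [rewrite add0r | right; exact: PNN]. Qed.

Lemma NNmul x n : NNg x -> NNg (x *+ n).
Proof. move=> H; elim: n => [|n IH]; first by left; rewrite mulr0n. by rewrite mulrS; exact: NNadd. Qed.

Lemma PmulS x n : P x -> P (x *+ n.+1).
Proof. move=> H; rewrite mulrS; apply: PNN => //; apply: NNmul; by right. Qed.

Lemma notP_opp x : NNg x -> ~ P (- x).
Proof. by move=> [->|H]; [rewrite oppr0 | exact: Pasym]. Qed.

Lemma Ptri x y : x = y \/ P (x - y) \/ P (y - x).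
Proof.
case: (classic (x - y = 0)) => [E|/Ptot [H|H]].
  by left; apply/eqP; rewrite -subr_eq0; apply/eqP.
- by right; left.
- by right; right; rewrite opprB in H.
Qed.

Definition Arch := forall c d, P c -> P d -> exists n, P (c *+ n - d).

Lemma nonarch : ~ Arch -> exists c d, [/\ P c, P d & forall n, P (d - c *+ n)].
Proof.
move=> nA.
have [c [d [Pc [Pd H]]]] : exists c d, P c /\ P d /\ forall n, ~ P (c *+ n - d).
  apply: NNPP => H; apply: nA => c d Pc Pd; apply: NNPP => H2; apply: H.
  exists c, d; split=> //; split=> // n Hn; apply: H2; by exists n.
exists c, d; split=> // n.
case: (Ptri (c *+ n.+1) d) => [E|[H1|H1]].
- have -> : d - c *+ n = c *+ n.+1 - c *+ n by rewrite E.
  by rewrite mulrS addrK.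
- by case: (H n.+1).
- have -> : d - c *+ n = (d - c *+ n.+1) + c by rewrite mulrS; ring.
  exact: Padd.
Qed.

Section ArchS.
Hypothesis HA : Arch.

Lemma multiples mu : P mu -> (forall nu, P nu -> ~ P (mu - nu)) ->
  forall x, P x -> exists k, x = mu *+ k.
Proof.
move=> Pmu Hl x Px; have [n Hn] := HA Pmu Px.
elim: n x Px Hn => [|n IH] x Px Hn.
  by exfalso; move: Hn; rewrite mulr0n sub0r; exact: Pasym.
case: (Ptri x mu) => [->|[H|H]]; first by exists 1%N; rewrite mulr1n.
- have [|k Hk] := IH (x - mu) H.
    by have -> : mu *+ n - (x - mu) = mu *+ n.+1 - x by rewrite mulrS; ring.
  by exists k.+1; rewrite mulrS -Hk; ring.
- by case: (Hl x Px).
Qed.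

Lemma no_least mu : P mu -> exists nu, P nu /\ P (mu - nu).
Proof.
move=> Pmu; apply: NNPP => H.
have Hl : forall nu, P nu -> ~ P (mu - nu) by move=> nu H1 H2; apply: H; exists nu.
have Hm := multiples Pmu Hl.
have Hs : forall x, x <> 0 -> exists k, x = mu *+ k \/ - x = mu *+ k.
  move=> x /Ptot [H1|H1]; [have [k Hk] := Hm _ H1 | have [k Hk] := Hm _ H1]; exists k; by [left|right].
have [k1 Hk1] := Hs (1, 0) (ltac:(by case)).
have [k2 Hk2] := Hs (0, 1) (ltac:(by case)).
have E2 : mu.2 = 0.
  have : mu.2 *+ k1 = 0 /\ k1 <> 0%N.
    by case: Hk1; rewrite pair_mulrn => -[E1 E2]; split=> // Ek; move: E1; rewrite Ek mulr0n.
  by move=> [/eqP]; rewrite mulrn_eq0 => /orP [/eqP //|/eqP].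
case: Hk2; rewrite pair_mulrn E2 mul0rn => -[_ //].
Qed.

Lemma small (F : seq V2) : exists nu, P nu /\ forall d, d \in F -> P d -> P (d - nu).
Proof.
elim: F => [|d F [nu0 [Pnu0 IH]]].
  have /Ptot [H|H] : ((1, 0) : V2) <> 0 by case.
  - by exists (1, 0).
  - by exists (- (1, 0)).
case: (classic (P d)) => Pd; last first.
  exists nu0; split=> // d'; rewrite inE => /orP [/eqP -> //|]; exact: IH.
have [mu [Pmu [N1 N2]]] : exists mu, P mu /\ NNg (nu0 - mu) /\ NNg (d - mu).
  case: (Ptri nu0 d) => [<-|[H|H]].
  - by exists nu0; rewrite subrr; split=> //; split; left.
  - by exists d; rewrite subrr; split=> //; split; [right|left].
  - by exists nu0; rewrite subrr; split=> //; split; [left|right].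
have [nu [Pnu Hnu]] := no_least Pmu.
exists nu; split=> // d'; rewrite inE => /orP [/eqP ->|Hd'] Pd'.
  have -> : d - nu = (mu - nu) + (d - mu) by ring.
  exact: PNN.
have -> : d' - nu = (d' - nu0) + ((mu - nu) + (nu0 - mu)) by ring.
apply: Padd; first exact: IH.
exact: PNN.
Qed.

End ArchS.

End Cone.

End Part3.
Import Part3.

Module Part4.
Import GRing.Theory Num.Theory.

Definition o (i : nat) : 'I_4 := inord i.
Definition W n0 n1 n2 n3 : seq 'I_4 :=
  nseq n0 (o 0) ++ nseq n1 (o 1) ++ nseq n2 (o 2) ++ nseq n3 (o 3).
Definition blk n0 n1 n2 (k : nat) : nat :=
  if k < n0 then 0 else if k < n0 + n1 then 1 else if k < n0 + n1 + n2 then 2 else 3.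

Lemma nth_W n0 n1 n2 n3 k : k < n0 + n1 + n2 + n3 ->
  nat_of_ord (nth (o 0) (W n0 n1 n2 n3) k) = blk n0 n1 n2 k.
Proof.
move=> Hk; rewrite /W /blk !nth_cat !size_nseq !nth_nseq.
case: (ltnP k n0) => H0; first by rewrite inordK.
case: (ltnP (k - n0) n1) => H1.
  have -> : k < n0 + n1 by lia.
  by rewrite inordK.
have -> : (k < n0 + n1) = false by lia.
case: (ltnP (k - n0 - n1) n2) => H2.
  have -> : k < n0 + n1 + n2 by lia.
  by rewrite inordK.
have -> : (k < n0 + n1 + n2) = false by lia.
have -> : k - n0 - n1 - n2 < n3 by lia.
by rewrite inordK.
Qed.

Lemma blk_step n0 n1 n2 p a j : j <= p -> p < n1 -> p < n2 ->
  blk n0 n1 n2 (a + j) = blk n0 n1 n2 a \/ blk n0 n1 n2 (a + j) = (blk n0 n1 n2 a).+1.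
Proof.
move=> Hj H1 H2; rewrite /blk.
by repeat (case: ltnP => ?); lia.
Qed.

Lemma blk_le n0 n1 n2 k : blk n0 n1 n2 k <= 3.
Proof. rewrite /blk; by do !case: ifP. Qed.

Definition inpair (t : nat) (c : 'I_4) := (nat_of_ord c == t) || (nat_of_ord c == t.+1).

Lemma infix_blocks n0 n1 n2 n3 p u s z :
  u ++ s ++ z = W n0 n1 n2 n3 -> size s <= p -> p < n1 -> p < n2 ->
  exists2 t, t < 3 & all (inpair t) s.
Proof.
move=> E Hs H1 H2.
have Hsz : size u + size s <= n0 + n1 + n2 + n3.
  by have := congr1 size E; rewrite /W !size_cat !size_nseq; lia.
exists (minn (blk n0 n1 n2 (size u)) 2); first exact: (leq_ltn_trans (geq_minr _ _)).
apply/(all_nthP (o 0)) => j Hj.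
have -> : nth (o 0) s j = nth (o 0) (W n0 n1 n2 n3) (size u + j).
  by rewrite -E nth_cat ltnNge leq_addr /= addKn nth_cat Hj.
rewrite /inpair nth_W; last by lia.
move: (blk_le n0 n1 n2 (size u + j)) (blk_le n0 n1 n2 (size u)).
have [->|->] := blk_step n0 (size u) (ltnW (leq_trans Hj Hs)) H1 H2; move=> B1 B2; apply/orP; lia.
Qed.

Local Open Scope ring_scope.

Definition VV (v : nat -> V2) (w : seq 'I_4) : V2 := \sum_(c <- w) v (nat_of_ord c).

Lemma VV_cat v w1 w2 : VV v (w1 ++ w2) = VV v w1 + VV v w2.
Proof. by rewrite /VV big_cat. Qed.

Lemma VV_nseq v k c : VV v (nseq k c) = v (nat_of_ord c) *+ k.
Proof. elim: k => [|k IH]; first by rewrite /VV big_nil mulr0n. by rewrite /VV /= big_cons -/(VV _ _) IH mulrS. Qed.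

Lemma VV_rep v s w : VV v (rep s w) = VV v w *+ s.
Proof. elim: s => [|s IH]; first by rewrite /VV /rep big_nil mulr0n. by rewrite /rep /= VV_cat -/(rep _ _) IH mulrS. Qed.

Lemma VV_two v t w : all (inpair t) w ->
  VV v w = v t *+ count (fun c : 'I_4 => nat_of_ord c == t) w + v t.+1 *+ count (fun c : 'I_4 => nat_of_ord c == t.+1) w
  /\ size w = (count (fun c : 'I_4 => nat_of_ord c == t) w + count (fun c : 'I_4 => nat_of_ord c == t.+1) w)%N.
Proof.
elim: w => [|c w IH]; first by rewrite /VV big_nil !mulr0n addr0.
rewrite /= => /andP [Hc /IH [E1 E2]]; rewrite /VV big_cons -/(VV _ _) E1.
move: Hc; rewrite /inpair => /orP [/eqP Ec|/eqP Ec]; rewrite Ec eqxx.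
- have -> : (t == t.+1) = false by lia.
  by rewrite /= E2 !mulrS add0n; split; [ring|].
- have -> : (t.+1 == t) = false by lia.
  by rewrite /= E2 !mulrS add0n addnS; split; [ring|].
Qed.

Definition PumpProp (L : seq 'I_4 -> Prop) (p : nat) :=
  forall w, L w -> (p < size w)%N ->
  exists u v x y z, [/\ w = u ++ v ++ x ++ y ++ z, (size (v ++ x ++ y) <= p)%N,
    (0 < size (v ++ y))%N & forall s, L (u ++ rep s v ++ x ++ rep s y ++ z)].

Lemma extract (v : nat -> V2) (Q : V2 -> Prop) (L : seq 'I_4 -> Prop) p n0 n1 n2 n3 :
  PumpProp L p -> (forall w, L w <-> Q (VV v w)) ->
  Q (VV v (W n0 n1 n2 n3)) -> (p < n1)%N -> (p < n2)%N ->
  exists t m0 m1 A, [/\ (t < 3)%N, (0 < m0 + m1 <= p)%N,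
    A + (v t *+ m0 + v t.+1 *+ m1) = VV v (W n0 n1 n2 n3) &
    forall s, Q (A + (v t *+ m0 + v t.+1 *+ m1) *+ s)].
Proof.
move=> HP HL HQ H1 H2.
have HLW : L (W n0 n1 n2 n3) by apply/HL.
have Hsz : (p < size (W n0 n1 n2 n3))%N by rewrite /W !size_cat !size_nseq; lia.
have [u [v' [x [y [z [Ew Hs Hvy Hpump]]]]]] := HP _ HLW Hsz.
have [t Ht Hall] : exists2 t, (t < 3)%N & all (inpair t) (v' ++ x ++ y).
  apply: (infix_blocks (n0 := n0) (n3 := n3) (u := u) (z := z) _ Hs H1 H2); by rewrite Ew !catA.
have Hall2 : all (inpair t) (v' ++ y) by move: Hall; rewrite !all_cat => /and3P [-> _ ->].
have [E1 E2] := VV_two v Hall2.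
exists t, (count (fun c : 'I_4 => nat_of_ord c == t) (v' ++ y)),
  (count (fun c : 'I_4 => nat_of_ord c == t.+1) (v' ++ y)), (VV v u + VV v x + VV v z); split=> //.
- apply/andP; split; rewrite -E2 //; move: Hs; rewrite !size_cat; lia.
- by rewrite -E1 Ew !VV_cat; ring.
- move=> s; have := Hpump s; rewrite HL; congr Q.
  by rewrite -E1 !VV_cat !VV_rep mulrnDl; ring.
Qed.

Lemma VV_W v n0 n1 n2 n3 :
  VV v (W n0 n1 n2 n3) = v 0%N *+ n0 + v 1%N *+ n1 + v 2%N *+ n2 + v 3%N *+ n3.
Proof. by rewrite /W !VV_cat !VV_nseq /o !inordK // !addrA. Qed.

End Part4.
Import Part4.

Module Part5.
Import GRing.Theory Num.Theory.

Section Main.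
Variables (G : group) (lt : G -> G -> Prop).
Hypothesis Hlo : left_order lt.
Variables (phi : Z2_group -> G).
Hypothesis Hhom : group_hom phi.
Hypothesis Hinj : injective phi.
Variables (X : finType) (gen : X -> G).
Hypothesis Hgen : generating gen.
Variable M : pda X.
Hypothesis HM : forall w, positive_cone lt (eval_word gen w) <-> pda_accepts M w.

Local Open Scope ring_scope.

Lemma phiD (x y : V2) : phi (x + y) = gmul (phi x) (phi y).
Proof. exact: Hhom. Qed.

Lemma phi0 : phi 0 = gone G.
Proof.
have E := phiD 0 0; rewrite addr0 in E.
have := congr1 (gmul (ginv (phi 0))) E.
by rewrite gmulA !gmulV gmul1.
Qed.

Definition Pz (z : V2) := lt (gone G) (phi z).

Lemma Pz0 : ~ Pz 0.
Proof. by rewrite /Pz phi0; case: Hlo => irr _ _ _; exact: irr. Qed.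

Lemma Pzadd x y : Pz x -> Pz y -> Pz (x + y).
Proof.
rewrite /Pz phiD => H1 H2; case: Hlo => _ tr _ inv.
apply: tr H1 _; have := inv (phi x) _ _ H2; by rewrite gmulr1.
Qed.

Lemma Pztot x : x <> 0 -> Pz x \/ Pz (- x).
Proof.
move=> Hx; case: Hlo => _ _ tot inv.
have Hne : phi x <> gone G by rewrite -phi0 => /Hinj.
case: (tot _ _ (nesym Hne)) => H; first by left.
right; have := inv (phi (- x)) _ _ H; rewrite gmulr1 -phiD addNr phi0; exact.
Qed.

Lemma eval_cat (w1 w2 : seq X) : eval_word gen (w1 ++ w2) = gmul (eval_word gen w1) (eval_word gen w2).
Proof. elim: w1 => [|a w1 IH] /=; first by rewrite gmul1. by rewrite IH gmulA. Qed.

Definition v4 (a b c d : V2) (i : nat) : V2 := nth 0 [:: a; b; c; d] i.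

Lemma core_pump a b c d : a <> 0 -> b <> 0 -> c <> 0 -> d <> 0 ->
  exists p, forall n0 n1 n2 n3, (p < n1)%N -> (p < n2)%N -> Pz (VV (v4 a b c d) (W n0 n1 n2 n3)) ->
  exists t m0 m1 A, [/\ (t < 3)%N, (0 < m0 + m1 <= p)%N,
    A + (v4 a b c d t *+ m0 + v4 a b c d t.+1 *+ m1) = VV (v4 a b c d) (W n0 n1 n2 n3) &
    forall s, Pz (A + (v4 a b c d t *+ m0 + v4 a b c d t.+1 *+ m1) *+ s)].
Proof.
move=> na nb nc nd.
have [wa Ea] := Hgen (phi a). have [wb Eb] := Hgen (phi b).
have [wc Ec] := Hgen (phi c). have [wd Ed] := Hgen (phi d).
pose h := fun i : 'I_4 => nth [::] [:: wa; wb; wc; wd] i.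
have Eh : forall i : 'I_4, eval_word gen (h i) = phi (v4 a b c d i).
  by case=> [[|[|[|[|i]]]] Hi].
have hne : forall i, h i <> [::].
  move=> i Hi; have := Eh i; rewrite Hi /= -phi0 => /Hinj.
  by case: i Hi => [[|[|[|[|i]]]] Hi'] //= _ E; [exact: na|exact: nb|exact: nc|exact: nd].
have [p Hp] := pumping (M' M h).
exists p => n0 n1 n2 n3 H1 H2 HW.
apply: (extract (L := fun s => pda_accepts (M' M h) s)) => //.
move=> s; rewrite -(invhom_acc M hne) -HM /positive_cone.
suff -> : eval_word gen (hw h s) = phi (VV (v4 a b c d) s) by [].
elim: s => [|i s IH]; first by rewrite /VV big_nil phi0.
by rewrite /hw /= eval_cat -/(hw h s) IH Eh /VV big_cons phiD.
Qed.

Lemma Pzasym x : Pz x -> ~ Pz (- x).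
Proof. exact: (Pasym Pz0 Pzadd). Qed.
Lemma Pzopp x : x = 0 \/ Pz x -> ~ Pz (- x).
Proof. exact: (notP_opp Pz0 Pzadd). Qed.

Lemma neg_ne0 (x : V2) : x <> 0 -> - x <> 0.
Proof. by move=> H /eqP; rewrite oppr_eq0 => /eqP. Qed.

Lemma arch_case : Arch Pz -> False.
Proof.
move=> HA.
pose e1 : V2 := (1, 0); pose e2 : V2 := (0, 1).
have ne1 : e1 <> 0 by case.
have ne2 : e2 <> 0 by case.
pose v := v4 e1 e2 (- e1) (- e2).
have [p Hp] := core_pump ne1 ne2 (neg_ne0 ne1) (neg_ne0 ne2).
pose D (t m0 m1 : nat) := v t *+ m0 + v t.+1 *+ m1.
pose F := map (fun t : 'I_3 * 'I_p.+1 * 'I_p.+1 => D t.1.1 t.1.2 t.2) (enum {: 'I_3 * 'I_p.+1 * 'I_p.+1}).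
have [[x y] [Pnu Hnu]] := small Pz0 Pzadd Pztot HA F.
pose N := (absz x + absz y + p + 1)%N.
pose n0 := absz (N%:Z + x); pose n1 := absz (N%:Z + y).
have HW : VV v (W n0 n1 N N) = (x, y).
  rewrite VV_W /v /v4 /= !pair_mulrn /=; congr pair; rewrite /n0 /n1 /N /=; lia.
have [t [m0 [m1 [A [Ht Hm HAD Hs]]]]] := Hp n0 n1 N N (ltac:(rewrite /n1 /N; lia)) (ltac:(rewrite /N; lia)) (ltac:(by rewrite HW)).
rewrite HW in HAD.
have HDF : D t m0 m1 \in F.
  move/andP: Hm => [_ Hm].
  apply/mapP; exists (Ordinal Ht, Ordinal (n:=p.+1) (m:=m0) (ltac:(lia)), Ordinal (n:=p.+1) (m:=m1) (ltac:(lia))) => //.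
  by rewrite mem_enum.
have HDne : D t m0 m1 <> 0.
  move/andP: Hm => [Hm _].
  rewrite /D /v /v4; case: t Ht {HAD Hs HDF} => [|[|[|t]]] // _ /=; rewrite !pair_mulrn /= => -[]; lia.
case: (Pztot HDne) => HD.
- have H0 := Hs 0%N; rewrite mulr0n addr0 in H0.
  have := Hnu _ HDF HD.
  have -> : D t m0 m1 - (x, y) = - A by rewrite -HAD /D (addrC A) opprD addrA subrr add0r.
  exact: Pzasym.
- have [n Hn] := HA _ _ HD Pnu.
  have := Hs n.+1.
  have -> : A + (v t *+ m0 + v t.+1 *+ m1) *+ n.+1 = - ((- D t m0 m1) *+ n - (x, y)).
    have E : forall (A0 D0 : V2) k, A0 + D0 *+ k.+1 = - ((- D0) *+ k - (A0 + D0)).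
      by move=> A0 D0 k; rewrite mulrS mulNrn; ring.
    by rewrite -HAD E.
  by apply: Pzopp; right.
Qed.

Lemma nonarch_case : ~ Arch Pz -> False.
Proof.
move=> nA; have [c [d [Pc Pd Hcd]]] := nonarch Pzadd Pztot nA.
have nc : c <> 0 by move=> E; apply: Pz0; rewrite -E.
have nd : d <> 0 by move=> E; apply: Pz0; rewrite -E.
have [p Hp] := core_pump nd (neg_ne0 nc) (neg_ne0 nd) nc.
have HW : VV (v4 d (- c) (- d) c) (W p.+1 p.+1 p.+1 p.+2) = c.
  by rewrite VV_W /v4 /= !mulNrn !mulrS; ring.
have [t [m0 [m1 [A [Ht Hm HAD Hs]]]]] := Hp p.+1 p.+1 p.+1 p.+2 (ltnSn p) (ltnSn p) (ltac:(by rewrite HW)).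
rewrite HW in HAD.
have EA : A = c - (v4 d (- c) (- d) c t *+ m0 + v4 d (- c) (- d) c t.+1 *+ m1).
  by apply: (addIr (v4 d (- c) (- d) c t *+ m0 + v4 d (- c) (- d) c t.+1 *+ m1)); rewrite HAD subrK.
rewrite EA in Hs; move: Hs; move/andP: Hm => [Hm _].
have K1 : forall k m, ~ Pz (c - d *+ k.+1 + c *+ m).
  move=> k m; have -> : c - d *+ k.+1 + c *+ m = - ((d - c *+ m.+1) + d *+ k) by rewrite !mulrS; ring.
  apply: Pzopp; right; apply: (PNN Pzadd (Hcd _)); apply: (NNmul Pzadd); by right.
have K2 : forall k, ~ Pz (c - c *+ k.+1).
  move=> k; have -> : c - c *+ k.+1 = - (c *+ k) by rewrite mulrS; ring.
  apply: Pzopp; apply: (NNmul Pzadd); by right.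
have K3 : forall k m, ~ Pz (c - c *+ m - d *+ k.+1).
  move=> k m; have -> : c - c *+ m - d *+ k.+1 = - (((d - c *+ 1) + d *+ k) + c *+ m) by rewrite mulrS; ring.
  apply: Pzopp; right; apply: (PNN Pzadd); last by apply: (NNmul Pzadd); right.
  apply: (PNN Pzadd (Hcd _)); apply: (NNmul Pzadd); by right.
case: t Ht {EA HAD} => [|[|[|t]]] // _; rewrite /v4 /= => Hs.
- case: m0 Hm Hs => [|k] Hm Hs.
    case: m1 Hm Hs => [|k] // _ Hs; apply: (K2 k); move: (Hs 2%N); congr Pz.
    by rewrite !mulNrn ?mulr0n !mulrS; ring.
  apply: (K1 k m1); move: (Hs 0%N); congr Pz; by rewrite !mulNrn mulr0n; ring.
- case: m1 Hm Hs => [|k] Hm Hs.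
    case: m0 Hm Hs => [|k] // _ Hs; apply: (K2 k); move: (Hs 2%N); congr Pz.
    by rewrite !mulNrn ?mulr0n !mulrS; ring.
  apply: (K3 k m0); move: (Hs 2%N); congr Pz; by rewrite !mulNrn !mulrS; ring.
- case: m0 Hm Hs => [|k] Hm Hs.
    case: m1 Hm Hs => [|k] // _ Hs; apply: (K2 k); move: (Hs 0%N); congr Pz.
    by rewrite !mulNrn ?mulr0n !mulrS; ring.
  apply: (K1 k m1); move: (Hs 2%N); congr Pz; by rewrite !mulNrn !mulrS; ring.
Qed.

Lemma contra : False.
Proof. case: (classic (Arch Pz)); [exact: arch_case | exact: nonarch_case]. Qed.

End Main.

End Part5.
Import Part5.

Theorem propositionA6 :
  (forall lt : Z2_group -> Z2_group -> Prop, ~ cf_preimage_left_order lt) /\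
  (forall (G : group), finitely_generated G ->
     (exists lt : G -> G -> Prop, cf_preimage_left_order lt) ->
     ~ (exists phi : Z2_group -> G, group_hom phi /\ injective phi)).
Proof.
split.
- move=> lt [Hlo [X [gen [Hgen [M HM]]]]].
  apply: (@contra Z2_group lt Hlo id (fun _ _ => erefl) (fun _ _ E => E) X gen Hgen M).
  move=> w; exact: HM.
- move=> G _ [lt [Hlo [X [gen [Hgen [M HM]]]]]] [phi [Hh Hi]].
  apply: (@contra G lt Hlo phi Hh Hi X gen Hgen M).
  move=> w; exact: HM.
Qed.
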